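(* Fix real $a$, $b>0$, $c>0$ and a prior $F$ with support $[\alpha,\beta]\subset(0,c)$ and positive variance. Let $x^u(\theta)=k\theta+d$ be the unique symmetric Bayesian Nash equilibrium of the affine relaxation (for $a=0$, $x^u(\theta)=(c-\theta)/(2b)$), and assume it is fully active, i.e. $x^u(\beta)\ge0$. Let $\underline x=x^u(\beta)$ and $\overline x=x^u(\alpha)$. If $$\overline x\le\frac1\alpha,\qquad c^2\le2b,\qquad a\le b\alpha,\qquad c\alpha^2-2b\alpha+a\ge0,$$ then $x^u$ is a symmetric Bayesian Nash equilibrium of the truncated Bayesian contest.
   Context: Let $P(x,y)=\tfrac12+(x-y)\bigl(c-b(x+y)+axy\bigr)$ and $\bar P=\min\{1,\max\{0,P\}\}$. Types are i.i.d. from $F$. In the affine relaxation, actions are real numbers and a type-$\theta$ player choosing $\tilde x$ against opponent strategy $x(\cdot)$ receives $\int[P(\tilde x,x(\theta'))-\theta\tilde x]\,dF(\theta')$. In the truncated Bayesian contest, actions are efforts in $[0,\infty)$ and the payoff is $\int[\bar P(\tilde x,x(\theta'))-\theta\tilde x]\,dF(\theta')$. *)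

(* Defs.v *)
From HB Require Import structures.
From mathcomp Require Import all_boot all_order all_algebra.
From mathcomp Require Import all_classical all_reals all_analysis.
Set Implicit Arguments. Unset Strict Implicit. Unset Printing Implicit Defensive.
Import Order.TTheory GRing.Theory Num.Theory.
Import numFieldNormedType.Exports.
Local Open Scope classical_set_scope.
Local Open Scope ring_scope.

Section contest.
Context {R : realType}.

Definition Pwin (a b c x y : R) : R :=
  1 / 2 + (x - y) * (c - b * (x + y) + a * x * y).

Definition Pbar (a b c x y : R) : R :=
  Num.min 1 (Num.max 0 (Pwin a b c x y)).

Definition payoff_aff (F : probability R R) (a b c : R) (s : R -> R)
  (th xt : R) : \bar R :=
  (\int[F]_(t in setT) (Pwin a b c xt (s t) - th * xt)%:E)%E.

Definition payoff_trunc (F : probability R R) (a b c : R) (s : R -> R)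
  (th xt : R) : \bar R :=
  (\int[F]_(t in setT) (Pbar a b c xt (s t) - th * xt)%:E)%E.

Definition support_is (F : probability R R) (al be : R) : Prop :=
  F `[al, be]%classic = 1%E /\
  forall U : set R, open U -> U `&` `[al, be]%classic !=set0 -> (0 < F U)%E.

Definition prior_mean (F : probability R R) : \bar R :=
  (\int[F]_(t in setT) t%:E)%E.

Definition prior_variance (F : probability R R) : \bar R :=
  (\int[F]_(t in setT) ((t - fine (prior_mean F)) ^+ 2)%:E)%E.

Definition symBNE_affine (F : probability R R) (a b c al be : R)
  (s : R -> R) : Prop :=
  forall th, al <= th <= be ->
  forall xt : R, (payoff_aff F a b c s th xt <= payoff_aff F a b c s th (s th))%E.

Definition symBNE_trunc (F : probability R R) (a b c al be : R)
  (s : R -> R) : Prop :=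
  forall th, al <= th <= be ->
  0 <= s th /\
  forall xt : R, 0 <= xt ->
    (payoff_trunc F a b c s th xt <= payoff_trunc F a b c s th (s th))%E.

End contest.

(* Main.v *)
Require Import Defs.
From HB Require Import structures.
From mathcomp Require Import all_boot all_order all_algebra.
From mathcomp Require Import all_classical all_reals all_analysis.
From mathcomp Require Import measurable_realfun ring lra.
Import Order.TTheory GRing.Theory Num.Theory.
Import numFieldNormedType.Exports.
Local Open Scope classical_set_scope.
Local Open Scope ring_scope.

Section helpers.
Context {R : realType} (F : probability R R) (al be : R).
Hypothesis alBe : al <= be.
Hypothesis Fab : F `[al, be]%classic = 1%E.

Definition clamp (t : R) : R := Num.max al (Num.min be t).

Lemma clamp_in t : al <= clamp t <= be.
Proof.
rewrite /clamp; apply/andP; split; first by rewrite le_max lexx.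
by rewrite ge_max alBe ge_min lexx.
Qed.

Lemma clamp_id t : al <= t <= be -> clamp t = t.
Proof.
move=> /andP[h1 h2]; rewrite /clamp (min_r h2) (max_r h1) //.
Qed.

Lemma measurable_clamp : measurable_fun setT clamp.
Proof.
apply: measurable_maxr; first exact: measurable_cst.
apply: measurable_minr; first exact: measurable_cst.
exact: measurable_id.
Qed.

Lemma int_clamp (f : R -> R) : measurable_fun setT f ->
  (\int[F]_(t in setT) (f t)%:E = \int[F]_(t in setT) (f (clamp t))%:E)%E.
Proof.
move=> mf; apply: ae_eq_integral => //.
- exact/measurable_EFinP.
- apply/measurable_EFinP; exact: measurableT_comp mf measurable_clamp.
- exists (~` `[al, be]%classic); split.
  + by apply: measurableC.
  + have h := @probability_setC _ _ _ F `[al, be]%classic (measurable_itv _).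
    by apply: (eq_trans h); rewrite Fab subee.
  + move=> t Ht Hin; apply: Ht => _; move: Hin => /=.
    by rewrite in_itv /= => Hi; rewrite clamp_id.
Qed.


Lemma integrable_bnd (g : R -> R) (M : R) : measurable_fun setT g ->
  (forall t, `|g t| <= M) -> F.-integrable setT (EFin \o g).
Proof.
move=> mg hM; apply: measurable_bounded_integrable => //.
- by apply: (@le_lt_trans _ _ 1%E); [exact: probability_le1 | exact: ltry].
- exists M; split; first by rewrite num_real.
  move=> r Mr t _; apply: (le_trans (hM t)); exact: ltW.
Qed.

Lemma integrable_cont (f : R -> R) : continuous f ->
  F.-integrable setT (EFin \o (fun t => f (clamp t))).
Proof.
move=> cf.
have cf' : {within `[al, be], continuous (fun y => `|f y|)}.
  apply: continuous_subspaceT => y.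
  exact: (continuous_comp (cf y) (@norm_continuous _ R^o (f y))).
have [m _ hm] := EVT_max alBe cf'.
apply: (@integrable_bnd _ `|f m|).
  exact: measurableT_comp (continuous_measurable_fun cf) measurable_clamp.
move=> t; apply: hm; rewrite in_itv /=; exact: clamp_in.
Qed.

End helpers.

Lemma Pwin_ge0 {R : realType} (a b c al x y : R) : 0 < b -> 0 < al ->
  c ^+ 2 <= 2 * b -> a <= b * al -> 0 <= c * al ^+ 2 - 2 * b * al + a ->
  0 <= x -> al * x <= 1 -> 0 <= y -> al * y <= 1 -> 0 <= Pwin a b c x y.
Proof.
move=> b0 al0 hc ha hq x0 xu y0 yu.
set u := al^-1.
have ual : u * al = 1 by rewrite mulVf // gt_eqF.
have u0 : 0 < u by rewrite invr_gt0.
have xu' : x <= u by rewrite -(ler_pM2l al0) [al * u]mulrC ual.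
have yu' : y <= u by rewrite -(ler_pM2l al0) [al * u]mulrC ual.
have hP0 : 0 <= Pwin a b c 0 y.
  have h : 0 <= 2 * b * Pwin a b c 0 y.
    have -> : 2 * b * Pwin a b c 0 y = (2*b*y - c)^+2 / 2 + (2*b - c^+2)/2.
      by rewrite /Pwin; field.
    apply: addr_ge0; apply: divr_ge0 => //; [exact: sqr_ge0 | lra].
  by move: h; rewrite pmulr_rge0 // mulr_gt0.
have hw : 0 <= b - a * y.
  have hau : a * u <= b.
    by rewrite -(ler_pM2r al0) -mulrA ual mulr1.
  have [a0|a0] := leP 0 a.
    by rewrite subr_ge0; apply: le_trans hau; rewrite ler_wpM2l.
  rewrite subr_ge0; apply: le_trans (ltW b0); nra.
have hbr : 0 <= c - b * (u + y) + a * u * y.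
  have e1 : c - b * (u + y) + a * u * y =
     u^+2 * (c * al ^+ 2 - 2 * b * al + a) + (u - y) * (u * (b * al - a)).
    by rewrite /u; field; rewrite gt_eqF.
  rewrite e1; apply: addr_ge0; first by apply: mulr_ge0 => //; exact: sqr_ge0.
  apply: mulr_ge0; first by rewrite subr_ge0.
  by apply: mulr_ge0; [exact: ltW | rewrite subr_ge0 ].
have hPu : 0 <= Pwin a b c u y.
  rewrite /Pwin; apply: addr_ge0 => //; apply: mulr_ge0 => //.
  by rewrite subr_ge0.
have id : u * Pwin a b c x y = (u - x) * Pwin a b c 0 y + x * Pwin a b c u y
   + (b - a * y) * x * u * (u - x).
  by rewrite /Pwin; ring.
have : 0 <= u * Pwin a b c x y.
  rewrite id; apply: addr_ge0; [apply: addr_ge0|].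
  - by apply: mulr_ge0 => //; rewrite subr_ge0.
  - exact: mulr_ge0.
  - apply: mulr_ge0; last by rewrite subr_ge0.
    by apply: mulr_ge0 => //; [exact: mulr_ge0 | exact: ltW].
by rewrite pmulr_rge0.
Qed.

Lemma Pwin_sym {R : realType} (a b c x y : R) : Pwin a b c x y + Pwin a b c y x = 1.
Proof. by rewrite /Pwin; field. Qed.

Lemma Pwin0_ge0 {R : realType} (a b c y : R) : 0 < b -> c ^+ 2 <= 2 * b ->
  0 <= Pwin a b c 0 y.
Proof.
move=> b0 hc.
have h : 0 <= 2 * b * Pwin a b c 0 y.
  have -> : 2 * b * Pwin a b c 0 y = (2*b*y - c)^+2 / 2 + (2*b - c^+2)/2.
    by rewrite /Pwin; field.
  apply: addr_ge0; apply: divr_ge0 => //; [exact: sqr_ge0 | lra].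
by move: h; rewrite pmulr_rge0 // mulr_gt0.
Qed.

Section helpers2.
Context {R : realType} (F : probability R R) (al be : R).
Hypothesis alBe : al <= be.
Hypothesis Fab : F `[al, be]%classic = 1%E.

Lemma le_int_ab (f g : R -> R) : measurable_fun setT f -> measurable_fun setT g ->
  F.-integrable setT (EFin \o (fun t => f (clamp al be t))) ->
  F.-integrable setT (EFin \o (fun t => g (clamp al be t))) ->
  (forall t, al <= t <= be -> f t <= g t) ->
  (\int[F]_(t in setT) (f t)%:E <= \int[F]_(t in setT) (g t)%:E)%E.
Proof.
move=> mf mg if_ ig h.
rewrite (@int_clamp _ F al be Fab f mf) (@int_clamp _ F al be Fab g mg).
apply: le_integral => // t _; rewrite lee_fin; apply: h; exact: clamp_in.
Qed.

End helpers2.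


Theorem proposition6 (R : realType) (F : probability R R) (a b c al be k d : R) :
  0 < b -> 0 < c ->
  0 < al -> al <= be -> be < c ->
  support_is F al be ->
  (0 < prior_variance F)%E ->
  symBNE_affine F a b c al be (fun t => k * t + d) ->
  0 <= k * be + d ->
  k * al + d <= 1 / al ->
  c ^+ 2 <= 2 * b ->
  a <= b * al ->
  0 <= c * al ^+ 2 - 2 * b * al + a ->
  symBNE_trunc F a b c al be (fun t => k * t + d).
Proof.
move=> b0 c0 al0 alBe beC [Fab _] _ hBNE hbe hal hc ha hq.
have contA x th : continuous (fun t => Pwin a b c x (k * t + d) - th * x).
  have -> : (fun t => Pwin a b c x (k * t + d) - th * x) =
    horner ((1/2 - th * x)%:P + (x%:P - (k%:P * 'X + d%:P)) *
       (c%:P - b%:P * (x%:P + (k%:P * 'X + d%:P)) + (a * x)%:P * (k%:P * 'X + d%:P))).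
    apply: funext => t; rewrite /Pwin !hornerE; ring.
  exact: continuous_horner.
have measA x th : measurable_fun setT (fun t => Pwin a b c x (k * t + d) - th * x).
  exact: continuous_measurable_fun.
have intA x th := @integrable_cont _ F al be alBe _ (contA x th).
have measT x th : measurable_fun setT (fun t => Pbar a b c x (k * t + d) - th * x).
  apply: measurable_funB; last exact: measurable_cst.
  apply: measurable_minr; first exact: measurable_cst.
  apply: measurable_maxr; first exact: measurable_cst.
  have := measA x 0; under eq_fun do rewrite mul0r subr0; done.
have Pbar01 x y : 0 <= Pbar a b c x y <= 1.
  by rewrite /Pbar le_min ge_min lexx le_max lexx /= ler01.
have bndT x th t : `|Pbar a b c x (k * t + d) - th * x| <= 1 + `|th * x|.
  apply: (le_trans (ler_normB _ _)); rewrite lerD2r.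
  have /andP[h1 h2] := Pbar01 x (k * t + d).
  by rewrite ger0_norm.
have intT x th : F.-integrable setT
   (EFin \o (fun t => Pbar a b c x (k * clamp al be t + d) - th * x)).
  apply: (@integrable_bnd _ F _ (1 + `|th * x|)); last by move=> t; exact: bndT.
  exact: measurableT_comp (measT x th) (measurable_clamp al be).
have intT' x th : F.-integrable setT
   (EFin \o (fun t => Pbar a b c x (k * t + d) - th * x)).
  apply: (@integrable_bnd _ F _ (1 + `|th * x|)); last by move=> t; exact: bndT.
  exact: measT.
have contP x : continuous (fun t => Pwin a b c x (k * t + d)).
  have := contA x 0; under eq_fun do rewrite mul0r subr0; done.
have intP x := @integrable_cont _ F al be alBe _ (contP x).
have intC (r : R) : F.-integrable setT (EFin \o (fun t : R => r)).
  apply: (@integrable_bnd _ F _ `|r|) => //; exact: measurable_cst.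
pose V x := fine (\int[F]_(t in setT) (Pwin a b c x (k * clamp al be t + d))%:E)%E.
have splitA x th : payoff_aff F a b c (fun t => k * t + d) th x = ((V x - th * x)%:E)%E.
  rewrite /payoff_aff (@int_clamp _ F al be Fab _ (measA x th)).
  under eq_integral do rewrite EFinB.
  rewrite integralB_EFin //.
  have hcst : (\int[F]_(t in setT) (th * x)%:E = (th * x)%:E)%E.
    rewrite (@integral_cst _ _ _ F setT measurableT ((th * x)%:E)).
    rewrite -[RHS]mule1; congr (_ * _)%E; exact: probability_setT.
  rewrite hcst EFinB /V fineK //.
  exact: (integrable_fin_num measurableT (intP x)).
have hin1 : al <= al <= be by rewrite lexx alBe.
have h1 := hBNE al hin1 (k * be + d).
have hin2 : al <= be <= be by rewrite lexx alBe.
have h2 := hBNE be hin2 (k * al + d).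
rewrite !splitA lee_fin in h1.
rewrite !splitA lee_fin in h2.
have hk : k * (be - al) ^+ 2 <= 0 by nra.
have hal' : al * (k * al + d) <= 1.
  rewrite -(ler_pM2l al0) in hal.
  by move: hal; rewrite mul1r mulfV ?gt_eqF.
have hs t : al <= t <= be -> 0 <= k * t + d /\ al * (k * t + d) <= 1.
  move=> /andP[t1 t2].
  have [eab|nab] := eqVneq al be.
    have -> : t = al by apply/eqP; rewrite eq_le t1 andbT eab.
    by split => //; rewrite -eab in hbe.
  have ab : 0 < (be - al) ^+ 2.
    by rewrite exprn_gt0 // subr_gt0 lt_neqAle nab alBe.
  have k0 : k <= 0.
    by move: hk; rewrite pmulr_lle0.
  have e1 : 0 <= k * (t - be) by rewrite mulr_le0 // subr_le0.
  have e2 : k * (t - al) <= 0 by rewrite mulr_le0_ge0 // subr_ge0.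
  have e3 : 0 <= k * t + d by lra.
  split => //.
  have e4 : al * (k * t + d) <= al * (k * al + d) by rewrite ler_pM2l //; lra.
  lra.
move=> th /andP[th1 th2].
have thin : al <= th <= be by rewrite th1 th2.
have [hs0 hs1] := hs th thin.
split; first exact: hs0.
move=> xt xt0.
have PgeA x y : 0 <= x -> al * x <= 1 -> 0 <= y -> al * y <= 1 -> 0 <= Pwin a b c x y.
  exact: (@Pwin_ge0 R a b c al x y b0 al0 hc ha hq).
have hA : (payoff_aff F a b c (fun t => (k * t + d)%R) th (k * th + d)%R <=
           payoff_trunc F a b c (fun t => (k * t + d)%R) th (k * th + d)%R)%E.
  apply: (@le_int_ab _ F al be alBe Fab
    (fun t => Pwin a b c (k * th + d) (k * t + d) - th * (k * th + d))
    (fun t => Pbar a b c (k * th + d) (k * t + d) - th * (k * th + d))) => //.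
  move=> t ht; rewrite lerD2r; have [ht0 ht1] := hs t ht.
  have hle1 : Pwin a b c (k * th + d) (k * t + d) <= 1.
    have := Pwin_sym a b c (k * th + d) (k * t + d).
    have := PgeA _ _ ht0 ht1 hs0 hs1; lra.
  by rewrite /Pbar le_min hle1 le_max lexx orbT.
have hF := hBNE th thin.
have [xsm|xbig] := leP (al * xt) 1.
  apply: le_trans hA; apply: le_trans (hF xt).
  apply: (@le_int_ab _ F al be alBe Fab
    (fun t => Pbar a b c xt (k * t + d) - th * xt)
    (fun t => Pwin a b c xt (k * t + d) - th * xt)) => //.
  move=> t ht; rewrite lerD2r; have [ht0 ht1] := hs t ht.
  have hP := PgeA _ _ xt0 xsm ht0 ht1.
  by rewrite /Pbar ge_min ge_max hP lexx orbT.
apply: le_trans hA; apply: le_trans (hF 0).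
apply: (@le_trans _ _ 0%E).
  apply: (@le_trans _ _ (\int[F]_(t in setT) ((fun _ => 0 : R) t)%:E)%E).
    apply: le_integral; [done | exact: (intT' xt th) | exact: (intC 0) | ].
    move=> t _; rewrite lee_fin subr_le0.
    have /andP[_ hb1] := Pbar01 xt (k * t + d).
    apply: (le_trans hb1); nra.
  by rewrite integral0_eq.
apply: integral_ge0 => t _; rewrite lee_fin mulr0 subr0.
exact: Pwin0_ge0.
Qed.
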